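(* Let $\mathcal{G}_s$ be a connected signed graph on nodes $\{1,\dots,n\}$ with symmetric real weight matrix $W$, signed adjacency matrix $A_s$, signed degree matrix $D_s=\mathrm{diag}\big(\sum_j|[A_s]_{ij}|\big)$ and signed Laplacian $L_s=D_s-A_s$. Take node $n$ as the single input node and partition $$L_s=\begin{bmatrix}A_s^f & B_s^f\\ (B_s^f)^T & a_s\end{bmatrix},\qquad A_s^f\in\mathbb{R}^{(n-1)\times(n-1)},\ B_s^f\in\mathbb{R}^{n-1},$$ and consider the leader-follower signed consensus system $\dot x=-A_s^fx-B_s^fu$ with scalar input $u$. Suppose $\mathcal{G}_s$ is structurally balanced, i.e. there is $G_t=\mathrm{diag}(\sigma_1,\dots,\sigma_n)$, $\sigma_i\in\{\pm1\}$, with $G_tA_sG_t$ entrywise nonnegative, and suppose it is input symmetric: for the unsigned Laplacian $L=G_tL_sG_t$ there is a permutation matrix $\Pi\neq I$ with $\Pi L=L\Pi$ and $\Pi e_n=e_n$. Then the system $\dot x=-A_s^fx-B_s^fu$ is uncontrollable.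
   Context: $L=G_tL_sG_t$ is the Laplacian of the underlying unsigned graph with edge weights $|W_{ij}|$; a permutation matrix commuting with it corresponds to a weight-preserving graph automorphism, here required to fix the input node $n$ and be nontrivial. *)

(* Defs.v *)
From mathcomp Require Import all_boot all_order all_fingroup all_algebra.
Set Implicit Arguments. Unset Strict Implicit. Unset Printing Implicit Defensive.
Import GRing.Theory Num.Theory.
Local Open Scope ring_scope.

(* Signed graph on nodes 'I_n given by its symmetric signed adjacency
   (weight) matrix A : 'M[R]_n, A i j = W_ij, zero diagonal. *)

Definition signed_graph (R : numDomainType) (n : nat) (A : 'M[R]_n) : Prop :=
  A^T = A /\ (forall i, A i i = 0).

Definition graph_connected (R : numDomainType) (n : nat) (A : 'M[R]_n) : Prop :=
  forall i j : 'I_n, connect (fun k l => A k l != 0) i j.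

Definition signed_degree (R : numDomainType) (n : nat) (A : 'M[R]_n) : 'M[R]_n :=
  diag_mx (\row_i \sum_j `|A i j|).

Definition signed_laplacian (R : numDomainType) (n : nat) (A : 'M[R]_n) : 'M[R]_n :=
  signed_degree A - A.

Definition is_gauge (R : numDomainType) (n : nat) (G : 'M[R]_n) : Prop :=
  exists s : 'rV[R]_n, (forall i, s 0 i = 1 \/ s 0 i = -1) /\ G = diag_mx s.

Definition structurally_balanced_by (R : numDomainType) (n : nat)
  (A G : 'M[R]_n) : Prop :=
  is_gauge G /\ forall i j, 0 <= (G *m A *m G) i j.

Definition follower_block (R : ringType) (m : nat) (L : 'M[R]_m.+1) : 'M[R]_m :=
  \matrix_(i < m, j < m) L (widen_ord (leqnSn m) i) (widen_ord (leqnSn m) j).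

Definition input_block (R : ringType) (m : nat) (L : 'M[R]_m.+1) : 'cV[R]_m :=
  \col_(i < m) L (widen_ord (leqnSn m) i) ord_max.

Definition ctrb_mx (R : ringType) (m : nat) (A : 'M[R]_m) (B : 'cV[R]_m)
  : 'M[R]_m :=
  \matrix_(i < m, k < m) ((A ^+ k) *m B) i 0.

Definition controllable (F : fieldType) (m : nat) (A : 'M[F]_m) (B : 'cV[F]_m)
  : bool := \rank (ctrb_mx A B) == m.

(* Main.v *)
Require Import Defs.
From mathcomp Require Import all_boot all_order all_fingroup all_algebra.
Set Implicit Arguments. Unset Strict Implicit. Unset Printing Implicit Defensive.
Import GRing.Theory Num.Theory.
Local Open Scope ring_scope.

Section Aux.
Variable R : fieldType.
Variable m : nat.
Local Notation w := (widen_ord (leqnSn m)).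
Local Notation E := (rowsub w (1%:M : 'M[R]_m.+1)).
Local Notation Et := (colsub w (1%:M : 'M[R]_m.+1)).
Local Notation e := (delta_mx ord_max 0 : 'cV[R]_m.+1).
Definition qv : 'rV[R]_m.+1 := \row_j (j != ord_max)%:R.
Local Notation Q := (diag_mx qv).

Lemma mulEt n (A : 'M[R]_(n, m.+1)) : A *m Et = colsub w A.
Proof. by rewrite mulmx_colsub mulmx1. Qed.

Lemma mulE n (A : 'M[R]_(m.+1, n)) : E *m A = rowsub w A.
Proof. by rewrite mul_rowsub_mx mul1mx. Qed.

Lemma EEt : E *m Et = 1%:M.
Proof.
rewrite mulEt; apply/matrixP => i j; rewrite !mxE.
by rewrite -val_eqE /= val_eqE.
Qed.

Lemma EtE : Et *m E = Q.
Proof.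
apply/matrixP => a b; rewrite !mxE.
have [->|ne] := eqVneq a ord_max.
  rewrite mul0rn big1 // => i _; rewrite !mxE.
  by rewrite -val_eqE /= gtn_eqF ?ltn_ord // mul0r.
have lt : (a < m)%N.
  by rewrite ltn_neqAle -ltnS ltn_ord andbT; move: ne; rewrite -val_eqE.
rewrite (bigD1 (Ordinal lt)) //= big1 ?addr0.
  rewrite !mxE.
  have -> : w (Ordinal lt) = a by apply: val_inj.
  by rewrite eqxx mul1r.
move=> i ni; rewrite !mxE.
have -> : (a == w i) = false.
  apply/negbTE; apply: contra ni => /eqP H; apply/eqP/val_inj => /=.
  by rewrite H.
by rewrite mul0r.
Qed.

Lemma follE (M : 'M[R]_m.+1) : follower_block M = E *m M *m Et.
Proof. by rewrite mulEt mulE; apply/matrixP => i j; rewrite !mxE. Qed.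

Lemma inpE (M : 'M[R]_m.+1) : input_block M = E *m M *m e.
Proof. by rewrite mulE -colE; apply/matrixP => i j; rewrite !mxE; by case: j => [[]]. Qed.

Lemma follN (M : 'M[R]_m.+1) : follower_block (- M) = - follower_block M.
Proof. by apply/matrixP => i j; rewrite !mxE. Qed.

Lemma inpN (M : 'M[R]_m.+1) : input_block (- M) = - input_block M.
Proof. by apply/matrixP => i j; rewrite !mxE. Qed.


Lemma EtE' n (A : 'M[R]_(n, m.+1)) : A *m Et *m E = A *m Q.
Proof. by rewrite -mulmxA EtE. Qed.

Lemma key (M L : 'M[R]_m.+1) (d : 'rV[R]_m.+1) (s : 'S_m.+1) (i : 'I_m.+1) :
  (forall j, d 0 j * d 0 j = 1) -> M = diag_mx d *m L *m diag_mx d ->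
  perm_mx s *m L = L *m perm_mx s -> s ord_max = ord_max -> s i != i ->
  exists2 u : 'rV[R]_m, u != 0 &
    forall k, u *m (follower_block M ^+ k *m input_block M) = 0.
Proof.
move=> dd HM PL smax si.
set g := diag_mx d. set P : 'M[R]_m.+1 := perm_mx s.
have gg : g *m g = 1%:M.
  rewrite mulmx_diag -diag_const_mx; congr diag_mx; apply/matrixP => a b.
  by rewrite !mxE dd.
have Qg : Q *m g = g *m Q.
  by rewrite !mulmx_diag; congr diag_mx; apply/matrixP => a b; rewrite !mxE mulrC.
have PQ : P *m Q = Q *m P.
  rewrite mul_mx_diag mul_diag_mx; apply/matrixP => a b.
  rewrite !mxE.
  case: (eqVneq (s a) b) => [<-|ne]; last by rewrite mulr0n mul0r mulr0.
  rewrite -{1}smax.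
  have -> : (s a != s ord_max) = (a != ord_max).
    by congr negb; apply: inj_eq; exact: perm_inj.
  by rewrite mulrC.
have Pe : P *m e = e.
  rewrite /P perm_mxEsub mul_rowsub_mx mul1mx; apply/matrixP => a b.
  rewrite !mxE -{1}smax.
  have -> : (s a == s ord_max) = (a == ord_max).
    by apply: inj_eq; exact: perm_inj.
  by [].
have ge : g *m e = d 0 ord_max *: e.
  rewrite mul_diag_mx; apply/matrixP => a b; rewrite !mxE.
  by case: eqP => [->|] //= _; rewrite !mulr0.
have Fk : forall k, follower_block M ^+ k = E *m (M *m Q) ^+ k *m Et.
  elim=> [|k IH]; first by rewrite !expr0 mulmx1 EEt.
  rewrite exprS IH follE exprS -!mulmxE !mulmxA EtE'.
  by [].
have gQg : forall n (X : 'M[R]_(n, m.+1)), X *m g *m Q *m g = X *m Q.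
  by move=> n X; rewrite -!mulmxA Qg (mulmxA g g) gg mul1mx.
have Nk : forall k, (M *m Q) ^+ k = g *m (L *m Q) ^+ k *m g.
  elim=> [|k IH]; first by rewrite !expr0 mulmx1 gg.
  rewrite exprS IH -!mulmxE HM exprS -!mulmxE !mulmxA gQg.
  by [].
pose z : 'rV[R]_m.+1 := delta_mx 0 i.
pose v := (z - z *m P) *m g.
have ni : i != ord_max by apply: contra si => /eqP ->; rewrite smax.
have lt : (i < m)%N.
  by rewrite ltn_neqAle -ltnS ltn_ord andbT; move: ni; rewrite -val_eqE.
pose i' := Ordinal lt.
have wi : w i' = i by apply: val_inj.
have vi : v 0 i = d 0 i.
  rewrite /v mul_mx_diag mxE /z -rowE !mxE.
  by rewrite (negbTE si) !eqxx /= subr0 mul1r.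
exists (colsub w v).
  apply/negP => /eqP /matrixP /(_ 0 i'); rewrite mxE wi vi mxE => H.
  by move: (dd i); rewrite H mul0r => /esym/eqP; rewrite oner_eq0.
move=> k.
have cPQ : GRing.comm P Q := PQ.
have cPL : GRing.comm P L := PL.
have cPX : GRing.comm P (Q * (L * Q) ^+ k * Q * L).
  by repeat apply: commrM => //; apply: commrX; apply: commrM.
have cX : P *m Q *m (L *m Q) ^+ k *m Q *m L = Q *m (L *m Q) ^+ k *m Q *m L *m P.
  by have := cPX; rewrite /GRing.comm -!mulmxE !mulmxA.
have uE : colsub w v = v *m Et by rewrite mulEt.
rewrite Fk inpE uE !mulmxA !EtE' Nk HM /v !mulmxA !gQg.
rewrite -mulmxA ge -scalemxAr -!mulmxA mulmxBl -mulmxA.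
have -> : P *m (Q *m ((L *m Q) ^+ k *m (Q *m (L *m e))))
          = Q *m ((L *m Q) ^+ k *m (Q *m (L *m e))).
  by rewrite !mulmxA cX -mulmxA Pe.
by rewrite subrr scaler0.
Qed.

End Aux.

Theorem theorem4 (R : realFieldType) (m : nat) (A : 'M[R]_m.+1) (Gt : 'M[R]_m.+1) :
  signed_graph A ->
  graph_connected A ->
  structurally_balanced_by A Gt ->
  (exists s : 'S_m.+1,
      (perm_mx s : 'M[R]_m.+1) != 1%:M /\
      perm_mx s *m (Gt *m signed_laplacian A *m Gt)
        = (Gt *m signed_laplacian A *m Gt) *m perm_mx s /\
      perm_mx s *m (delta_mx ord_max 0 : 'cV[R]_m.+1) = (delta_mx ord_max 0 : 'cV[R]_m.+1)) ->
  ~~ controllable (- follower_block (signed_laplacian A))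
                  (- input_block (signed_laplacian A)).
Proof.
move=> _ _ [[dv [Hd ->]] _] [s [Pn1 [PL Pe]]].
set Ls := signed_laplacian A.
set g := diag_mx dv.
have dd : forall j, dv 0 j * dv 0 j = 1.
  by move=> j; case: (Hd j) => ->; rewrite ?mulrNN mulr1.
have gg : g *m g = 1%:M.
  rewrite mulmx_diag -diag_const_mx; congr diag_mx; apply/matrixP => a b.
  by rewrite !mxE dd.
have smax : s ord_max = ord_max.
  move/matrixP: Pe => /(_ ord_max 0).
  rewrite perm_mxEsub mul_rowsub_mx mul1mx !mxE !eqxx /=.
  case: eqP => // _ /eqP; rewrite eq_sym oner_eq0 //.
case: (pickP (fun i => s i != i)) => [i si | H]; last first.
  have s1 : s = 1%g.
    by apply/permP => j; rewrite perm1; apply/eqP; move: (H j) => /negbFE.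
  by move: Pn1; rewrite s1 perm_mx1 eqxx.
have h1 : - Ls = g *m (- (g *m Ls *m g)) *m g.
  by rewrite mulmxN mulNmx !mulmxA gg mul1mx -mulmxA gg mulmx1.
have h2 : perm_mx s *m (- (g *m Ls *m g)) = (- (g *m Ls *m g)) *m perm_mx s.
  by rewrite mulmxN mulNmx PL.
have [u u0 Hu] := key dd h1 h2 smax si.
rewrite /controllable -follN -inpN; apply/negP => /eqP Hr.
set C := ctrb_mx _ _ in Hr.
have Cu : C \in unitmx by rewrite -row_free_unit /row_free Hr.
have uC : u *m C = 0.
  apply/matrixP => a k; rewrite !mxE (ord1 a).
  move: (Hu k) => /matrixP /(_ 0 0); rewrite !mxE /C /ctrb_mx.
  move=> H; rewrite -[RHS]H; apply: eq_bigr => j _; by rewrite mxE.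
have := mulmxK Cu u; rewrite uC mul0mx => /esym E0.
by move: u0; rewrite E0 eqxx.
Qed.
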